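(* For a right $R$-module $M$ the following are equivalent: (a) $M$ is endoregular; (b) $M$ satisfies the $D_2$ condition and every right $R$-module belongs to $\mathfrak{F}_M$.
   Context: Modules are unitary right $R$-modules. $M$ is endoregular if $\mathrm{End}_R(M)$ is a von Neumann regular ring. A module $N$ is finitely $M$-generated if there is an epimorphism $M^{(n)}\to N$ for some integer $n>0$. $\mathfrak{F}_M$ is the class of right $R$-modules $A$ such that for every monomorphism $\alpha:N\to M$ with $N$ finitely $M$-generated and every homomorphism $\beta:N\to A$ there is $\gamma:M\to A$ with $\beta=\gamma\alpha$. A module $X$ satisfies the $D_2$ condition if for every submodule $Y\le X$ such that $X/Y$ is isomorphic to a direct summand of $X$, $Y$ is a direct summand of $X$. *)

(* Defs.v *)
From HB Require Import structures.
From mathcomp Require Import all_boot all_algebra.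
Set Implicit Arguments. Unset Strict Implicit. Unset Printing Implicit Defensive.
Import GRing.Theory.
Local Open Scope ring_scope.

(* Right R-modules are modelled as (unitary) left modules over the converse
   ring R^c : for m : M and r : R, the right action m.r is  r *: m  with r : R^c. *)
Notation rmodType R := (lmodType (R^c)%type).

Definition is_hom (R : pzRingType) (M N : rmodType R) (f : M -> N) : Prop :=
  forall (a : R^c) (x y : M), f (a *: x + y) = a *: f x + f y.

(* M is endoregular: End_R(M) (multiplication = composition) is von Neumann
   regular, i.e. every f admits g with f g f = f. *)
Definition endoregular (R : pzRingType) (M : rmodType R) : Prop :=
  forall f : M -> M, is_hom f ->
    exists g : M -> M, is_hom g /\ (forall x, f (g (f x)) = f x).

Definition submod (R : pzRingType) (M : rmodType R) (Y : M -> Prop) : Prop :=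
  Y 0 /\ (forall (a : R^c) (x y : M), Y x -> Y y -> Y (a *: x + y)).

Definition summand (R : pzRingType) (M : rmodType R) (Y : M -> Prop) : Prop :=
  submod Y /\ exists Z : M -> Prop, submod Z /\
    (forall x, Y x -> Z x -> x = 0) /\
    (forall x, exists y z, Y y /\ Z z /\ x = y + z).

(* M/Y is isomorphic to a direct summand K of M: equivalently (first
   isomorphism theorem) there is an epimorphism from M onto a direct
   summand K of M whose kernel is Y. *)
Definition quot_iso_summand (R : pzRingType) (M : rmodType R) (Y : M -> Prop) : Prop :=
  exists p : M -> M, is_hom p /\
    summand (fun x => exists m, p m = x) /\
    (forall m, p m = 0 <-> Y m).

Definition D2 (R : pzRingType) (M : rmodType R) : Prop :=
  forall Y : M -> Prop, submod Y -> quot_iso_summand Y -> summand Y.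

Definition fin_gen_by (R : pzRingType) (M N : rmodType R) : Prop :=
  exists n : nat, (0 < n)%N /\
    exists f : {ffun 'I_n -> M} -> N, is_hom f /\ (forall y, exists x, f x = y).

Definition in_FM (R : pzRingType) (M A : rmodType R) : Prop :=
  forall (N : rmodType R) (alpha : N -> M) (beta : N -> A),
    fin_gen_by M N -> is_hom alpha -> injective alpha -> is_hom beta ->
    exists gamma : M -> A, is_hom gamma /\ (forall x, beta x = gamma (alpha x)).

(* Main.v *)
From HB Require Import structures.
Require Import Defs.
From mathcomp Require Import all_boot all_algebra.
From mathcomp Require Import boolp.
Set Implicit Arguments. Unset Strict Implicit. Unset Printing Implicit Defensive.
Import GRing.Theory.
Local Open Scope ring_scope.

Section Hom.
Variables (R : pzRingType) (M N : rmodType R) (f : M -> N) (hf : is_hom f).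
Lemma hom0 : f 0 = 0.
Proof.
have := hf 1 0 0; rewrite scale1r addr0 => H.
by rewrite !scale1r in H; apply: (addrI (f 0)); rewrite addr0 -H.
Qed.
Lemma homD x y : f (x + y) = f x + f y.
Proof. by have := hf 1 x y; rewrite !scale1r. Qed.
Lemma homZ a x : f (a *: x) = a *: f x.
Proof. by have := hf a x 0; rewrite !addr0 hom0 addr0. Qed.
Lemma homN x : f (- x) = - f x.
Proof. by rewrite -scaleN1r homZ scaleN1r. Qed.
Lemma homB x y : f (x - y) = f x - f y.
Proof. by rewrite homD homN. Qed.
Lemma hom_sum n (F : 'I_n -> M) : f (\sum_(k < n) F k) = \sum_(k < n) f (F k).
Proof. exact: (big_morph f homD hom0). Qed.
End Hom.

Lemma hom_comp (R : pzRingType) (M N K : rmodType R) (f : N -> K) (g : M -> N) :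
  is_hom f -> is_hom g -> is_hom (fun x => f (g x)).
Proof. by move=> hf hg a x y; rewrite hg hf. Qed.
Lemma hom_sub (R : pzRingType) (M N : rmodType R) (f g : M -> N) :
  is_hom f -> is_hom g -> is_hom (fun x => f x - g x).
Proof.
by move=> hf hg a x y; rewrite hf hg scalerBr opprD addrACA.
Qed.
Lemma hom_add (R : pzRingType) (M N : rmodType R) (f g : M -> N) :
  is_hom f -> is_hom g -> is_hom (fun x => f x + g x).
Proof.
by move=> hf hg a x y; rewrite hf hg scalerDr addrACA.
Qed.
Lemma hom_id (R : pzRingType) (M : rmodType R) : is_hom (fun x : M => x).
Proof. by []. Qed.
Section SubMod.
Variables (R : pzRingType) (M : rmodType R) (P : M -> Prop) (hP : submod P).

Definition SM := {x : M | `[< P x >]}.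
HB.instance Definition _ := [Choice of SM by <:].

Lemma P0 : `[< P 0 >]. Proof. by apply/asboolP; case: hP. Qed.
Lemma PS (a : R^c) x y : `[< P x >] -> `[< P y >] -> `[< P (a *: x + y) >].
Proof. by move=> /asboolP hx /asboolP hy; apply/asboolP; case: hP => _; apply. Qed.
Lemma PD x y : `[< P x >] -> `[< P y >] -> `[< P (x + y) >].
Proof. by move=> hx hy; have := PS 1 hx hy; rewrite scale1r. Qed.
Lemma PN x : `[< P x >] -> `[< P (- x) >].
Proof. by move=> hx; have := PS (-1) hx P0; rewrite addr0 scaleN1r. Qed.
Lemma PZ (a : R^c) x : `[< P x >] -> `[< P (a *: x) >].
Proof. by move=> hx; have := PS a hx P0; rewrite addr0. Qed.

Definition sm0 : SM := exist _ 0 P0.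
Definition smadd (x y : SM) : SM := exist _ (val x + val y) (PD (valP x) (valP y)).
Definition smopp (x : SM) : SM := exist _ (- val x) (PN (valP x)).
Definition smscale (a : R^c) (x : SM) : SM := exist _ (a *: val x) (PZ a (valP x)).

Lemma smaddA : associative smadd.
Proof. by move=> x y z; apply: val_inj; rewrite /= addrA. Qed.
Lemma smaddC : commutative smadd.
Proof. by move=> x y; apply: val_inj; rewrite /= addrC. Qed.
Lemma smadd0 : left_id sm0 smadd.
Proof. by move=> x; apply: val_inj; rewrite /= add0r. Qed.
Lemma smaddN : left_inverse sm0 smopp smadd.
Proof. by move=> x; apply: val_inj; rewrite /= addNr. Qed.
HB.instance Definition _ := GRing.isZmodule.Build SM smaddA smaddC smadd0 smaddN.
Lemma smscaleA a b v : smscale a (smscale b v) = smscale (a * b) v.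
Proof. by apply: val_inj; rewrite /= scalerA. Qed.
Lemma smscale1 : left_id 1 smscale.
Proof. by move=> x; apply: val_inj; rewrite /= scale1r. Qed.
Lemma smscaleDr : right_distributive smscale +%R.
Proof. by move=> a x y; apply: val_inj; rewrite /= scalerDr. Qed.
Lemma smscaleDl v : {morph smscale^~ v: a b / a + b}.
Proof. by move=> a b; apply: val_inj; rewrite /= scalerDl. Qed.
HB.instance Definition _ := GRing.Zmodule_isLmodule.Build (R^c) SM smscaleA smscale1 smscaleDr smscaleDl.

Definition SMM : rmodType R := SM.
Lemma val_hom : is_hom (fun x : SMM => val x).
Proof. by []. Qed.
End SubMod.

Section Reg.
Variables (R : pzRingType) (M : rmodType R) (reg : endoregular M).

Lemma reg_D2 : D2 M.
Proof.
move=> Y hY [p [hp [_ kerp]]]; split => //.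
have [q [hq hpq]] := reg hp.
exists (fun x => exists m, q (p m) = x); split.
  split; first by exists 0; rewrite (hom0 hp) (hom0 hq).
  move=> a _ _ [m1 <-] [m2 <-]; exists (a *: m1 + m2).
  by rewrite hp hq.
split.
  move=> x /kerp hx [m hm]; move: hx; rewrite -hm hpq => pm0.
  by rewrite pm0 (hom0 hq).
move=> x; exists (x - q (p x)), (q (p x)); split; last split.
- by apply/kerp; rewrite (homB hp) hpq subrr.
- by exists x.
- by rewrite subrK.
Qed.
End Reg.

Section Fam.
Variables (R : pzRingType) (M : rmodType R) (reg : endoregular M).
Variables (h : nat -> M -> M) (hh : forall k, is_hom (h k)).

Lemma fam_idem n : exists e : M -> M, [/\ is_hom e, (forall m, e (e m) = e m),
  (forall k, (k < n)%N -> forall m, e (h k m) = h k m) &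
  (forall m, exists x : nat -> M, e m = \sum_(k < n) h k (x k))].
Proof.
elim: n => [|n [e [he hee hek hes]]].
  exists (fun _ => 0); split => //.
  - by move=> a x y; rewrite scaler0 addr0.
  - by exists (fun _ => 0); rewrite big_ord0.
pose c m := h n m - e (h n m).
have hc : is_hom c by apply: hom_sub => //; apply: hom_comp.
have ec m : e (c m) = 0 by rewrite /c (homB he) hee subrr.
have [y [hy hcy]] := reg hc.
pose f1 m := c (y (m - e m)).
have hf1 : is_hom f1.
  apply: hom_comp => //; apply: hom_comp => //; exact: hom_sub.
have ef1 m : e (f1 m) = 0 by apply: ec.
have f1e m : f1 (e m) = 0 by rewrite /f1 hee subrr (hom0 hy) (hom0 hc).
have f1f1 m : f1 (f1 m) = f1 m by rewrite {1}/f1 ef1 subr0 hcy.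
exists (fun m => e m + f1 m); split.
- exact: hom_add.
- by move=> m; rewrite (homD he) (homD hf1) hee ef1 f1e f1f1 addr0 add0r.
- move=> k; rewrite ltnS leq_eqVlt => /orP [/eqP -> | kn] m.
    by rewrite /f1 -/(c m) hcy /c addrC subrK.
  by rewrite hek // /f1 hek // subrr (hom0 hy) (hom0 hc) addr0.
- move=> m; have [x hx] := hes (m - h n (y (m - e m))).
  exists (fun k => if k == n then y (m - e m) else x k).
  rewrite big_ord_recr /= eqxx.
  rewrite (eq_bigr (fun k : 'I_n => h k (x k))); last first.
    by move=> i _; rewrite /= ltn_eqF.
  rewrite -hx (homB he) /f1 /c.
  by rewrite [in LHS]addrA addrAC.
Qed.
End Fam.

Lemma reg_FM (R : pzRingType) (M : rmodType R) (reg : endoregular M) (A : rmodType R) :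
  in_FM M A.
Proof.
move=> N alpha beta [n [_ [f [hf fepi]]]] ha ainj hb.
pose delta (k : nat) (m : M) : {ffun 'I_n -> M} :=
  [ffun j : 'I_n => if (j : nat) == k then m else 0].
have hdelta k : is_hom (delta k).
  move=> a x z; apply/ffunP => j; rewrite !ffunE.
  by case: ifP => _ //; rewrite scaler0 addr0.
pose h k m := alpha (f (delta k m)).
have hh k : is_hom (h k) by apply: hom_comp => //; apply: hom_comp.
have decX (X : {ffun 'I_n -> M}) : X = \sum_(k < n) delta k (X k).
  apply/ffunP => j; rewrite sum_ffunE (bigD1 j) //= ffunE eqxx big1 ?addr0 //.
  by move=> k kj; rewrite ffunE; case: eqP => // jk; case/eqP: kj; apply: val_inj.
have [e [he hee hek hes]] := fam_idem reg hh n.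
have exZ m : exists z, alpha z = e m.
  have [x ->] := hes m.
  exists (f (\sum_(k < n) delta k (x k))).
  by rewrite (hom_sum hf) (hom_sum ha).
pose z m := proj1_sig (cid (exZ m)).
have hz m : alpha (z m) = e m := proj2_sig (cid (exZ m)).
exists (fun m => beta (z m)); split.
  move=> a m1 m2; rewrite -hb; congr beta; apply: ainj.
  by rewrite ha !hz he.
move=> x; congr beta; apply: ainj; rewrite hz.
have [X <-] := fepi x.
have key : alpha (f X) = \sum_(k < n) h k (X k).
  by rewrite {1}(decX X) (hom_sum hf) (hom_sum ha).
rewrite key (hom_sum he).
by apply: eq_bigr => k _; rewrite hek.
Qed.

Lemma b_to_a (R : pzRingType) (M : rmodType R) :
  D2 M -> (forall A : rmodType R, in_FM M A) -> endoregular M.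
Proof.
move=> hD2 hFM f hf.
pose P := fun x : M => exists m, f m = x.
have hP : submod P.
  split; first by exists 0; rewrite (hom0 hf).
  by move=> a _ _ [m1 <-] [m2 <-]; exists (a *: m1 + m2); rewrite hf.
pose N := SMM hP.
have PN x : P x -> `[< P x >] by move=> px; apply/asboolP.
have fg : fin_gen_by M N.
  exists 1%N; split => //.
  exists (fun X : {ffun 'I_1 -> M} => (exist _ (f (X ord0)) (PN _ (ex_intro _ _ erefl)) : N)).
  split.
    by move=> a X Y; apply: val_inj; rewrite /= !ffunE hf.
  move=> y; have /asboolP [m hm] := valP y.
  exists [ffun=> m]; apply: val_inj; by rewrite /= ffunE.
have [gamma [hgam hgx]] := hFM N N (fun x : N => val x) (fun x => x) fg
   (@val_hom _ _ _ hP) val_inj (@hom_id _ N).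
pose r x := val (gamma x : N) : M.
have hr : is_hom r by move=> a x y; rewrite /r hgam.
have rP x : P (r x) by apply/asboolP; exact: (valP (gamma x)).
have rid x : P x -> r x = x.
  move=> px; have := hgx (exist _ x (PN _ px) : N) => /(congr1 val) /= H.
  exact: (esym H).
have hY : submod (fun m => f m = 0).
  split; first exact: hom0 hf.
  by move=> a x y fx fy; rewrite hf fx fy scaler0 addr0.
have [_ [C [hC [CY Cdec]]]] : summand (fun m => f m = 0).
  apply: hD2 => //; exists f; split => //; split => //.
  split => //; exists (fun x => r x = 0); split.
    split; first exact: hom0 hr.
    by move=> a x y rx ry; rewrite hr rx ry scaler0 addr0.
  split.
    by move=> x px rx; rewrite -(rid x px).
  move=> x; exists (r x), (x - r x); split; first exact: rP.
  split; last by rewrite addrC subrK.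
  by rewrite (homB hr) (rid _ (rP x)) subrr.
have Cuniq c c' : C c -> C c' -> f c = f c' -> c = c'.
  move=> hc hc' fcc; apply/eqP; rewrite -subr_eq0; apply/eqP.
  apply: CY; first by rewrite (homB hf) fcc subrr.
  by have := hC.2 (-1) c' c hc' hc; rewrite scaleN1r addrC.
have exg y : exists c, C c /\ f c = r y.
  have [m hm] := rP y; have [k [c [fk [Cc em]]]] := Cdec m.
  by exists c; split => //; rewrite -hm em (homD hf) fk add0r.
pose g y := proj1_sig (cid (exg y)).
have hg y : C (g y) /\ f (g y) = r y := proj2_sig (cid (exg y)).
exists g; split.
  move=> a y1 y2; apply: Cuniq; first exact: (hg _).1.
    by apply: hC.2; [exact: (hg _).1 | exact: (hg _).1].
  by rewrite hf !(hg _).2 hr.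
move=> x; rewrite (hg _).2; apply: rid; by exists x.
Qed.

Theorem mainTheorem6 (R : pzRingType) (M : rmodType R) :
  endoregular M <-> (D2 M /\ forall A : rmodType R, in_FM M A).
Proof.
split.
  by move=> reg; split; [exact: reg_D2 | move=> A; exact: reg_FM].
by case=> h1 h2; exact: b_to_a.
Qed.
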